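(* Let $r\geq 1$, let $\mathbf a=(a_1,\ldots,a_r)$ be positive integers, let $D$ be a positive common multiple of $a_1,\ldots,a_r$, and let $\sigma=a_1+\cdots+a_r$. Then for every integer $n\geq 0$, $$ (r-1)!\,p_{\mathbf a}(n) = \sum_{j= \lceil \frac{n+\sigma}{D} \rceil - r}^{\lfloor n/D\rfloor} (j+1)(j+2)\cdots (j+r-1)\, f_{\mathbf a}(n-jD). $$
   Context: $p_{\mathbf a}(n)$ is the number of integer solutions $(x_1,\ldots,x_r)$ of $a_1x_1+\cdots+a_rx_r=n$ with all $x_i\geq 0$. For every integer $m\geq 0$, $f_{\mathbf a}(m)$ denotes the number of integer tuples $(j_1,\ldots,j_r)$ with $a_1j_1+\cdots+a_rj_r=m$ and $0\leq j_k\leq \frac{D}{a_k}-1$ for $1\leq k\leq r$ (so $f_{\mathbf a}(m)=0$ for $m> rD-\sigma$). *)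

(* Defs.v *)
From mathcomp Require Import all_boot all_order all_algebra.
Set Implicit Arguments. Unset Strict Implicit. Unset Printing Implicit Defensive.
Import Order.TTheory GRing.Theory Num.Theory.

Definition sigma_a (r : nat) (a : 'I_r -> nat) : nat := (\sum_(i < r) a i)%N.

(* p_a(n): number of (x_1,...,x_r) in N^r with sum a_i x_i = n.
   Since every a_i >= 1 (standing hypothesis), every solution has x_i <= n,
   so the solutions are exactly counted among functions 'I_r -> 'I_(n+1). *)
Definition p_a (r : nat) (a : 'I_r -> nat) (n : nat) : nat :=
  #|[set x : {ffun 'I_r -> 'I_n.+1} | (\sum_(i < r) a i * x i)%N == n]|.

(* f_a(m): number of (j_1,...,j_r) with sum a_k j_k = m and 0 <= j_k <= D/a_k - 1.
   Since D/a_k - 1 < D, such tuples are counted among functions 'I_r -> 'I_D. *)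
Definition f_a (r : nat) (a : 'I_r -> nat) (D m : nat) : nat :=
  #|[set j : {ffun 'I_r -> 'I_D} |
      [forall k, (j k < D %/ a k)%N] && ((\sum_(k < r) a k * j k)%N == m)]|.

(* Main.v *)
Require Import Defs.
From mathcomp Require Import all_boot all_order all_algebra.
From mathcomp Require Import zify ring.
Import Order.TTheory GRing.Theory Num.Theory.
Local Open Scope ring_scope.

Lemma comp_sum (I : Type) (s : seq I) (P : pred I) (F : I -> {poly int}) q :
  (\sum_(i <- s | P i) F i) \Po q = \sum_(i <- s | P i) (F i \Po q).
Proof. exact: (big_morph (fun p => p \Po q) (fun p p' => comp_polyD p p' q) (comp_poly0 q)). Qed.

Lemma coef_prod_sum (r N : nat) (P : 'I_r -> 'I_N -> bool) (E : 'I_r -> 'I_N -> nat) m :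
 (\prod_(i < r) \sum_(k : 'I_N) (P i k)%:R *: 'X^(E i k) : {poly int})`_m
 = (#|[set x : {ffun 'I_r -> 'I_N} | [forall i, P i (x i)] && ((\sum_i E i (x i))%N == m)]|)%:R.
Proof.
rewrite bigA_distr_bigA /=.
have H (x : {ffun 'I_r -> 'I_N}) : \prod_i ((P i (x i))%:R *: 'X^(E i (x i)) : {poly int})
   = ([forall i, P i (x i)] : nat)%:R *: 'X^(\sum_i E i (x i)).
  rewrite (big_morph (fun n => 'X^n : {poly int}) (exprD 'X) (expr0 'X)).
  rewrite scaler_prod; congr (_ *: _).
  rewrite -natr_prod; congr (_%:R).
  case: (boolP [forall i, P i (x i)]) => [/forallP Hall | /forallP Hn].
    by rewrite big1 // => i _; rewrite Hall.
  have [i Hi] : exists i, ~~ P i (x i).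
    by apply/existsP; rewrite -negb_forall; apply/forallP.
  by rewrite (bigD1 i) //= (negbTE Hi).
rewrite (eq_bigr _ (fun x _ => H x)) coef_sumMXn.
rewrite -sum1_card -natr_sum; congr (_%:R).
rewrite big_mkcond [RHS]big_mkcond /=; apply: eq_bigr => x _.
by rewrite inE; case: [forall i, P i (x i)]; case: (_ == m).
Qed.
Lemma sum_trunc (d D a : nat) : (d <= D)%N ->
  \sum_(k < D) ((k < d)%N%:R *: 'X^(a * k) : {poly int}) = \sum_(0 <= k < d) 'X^(a * k).
Proof.
move=> hd.
rewrite -(big_mkord xpredT (fun k => ((k < d)%N%:R *: 'X^(a * k) : {poly int}))).
rewrite (big_cat_nat (leq0n d) hd) /=.
rewrite [X in _ + X]big_nat_cond [X in _ + X]big1 ?addr0.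
  rewrite big_nat_cond [RHS]big_nat_cond; apply: eq_bigr => k /andP [/andP [_ hk] _].
  by rewrite hk scale1r.
move=> k /andP [/andP [hk _] _]; by rewrite ltnNge hk scale0r.
Qed.

Lemma p_coef r (a : 'I_r -> nat) n :
  (p_a a n)%:R = (\prod_(i < r) \sum_(0 <= k < n.+1) 'X^(a i * k) : {poly int})`_n.
Proof.
have := coef_prod_sum _ _ (fun (i : 'I_r) (k : 'I_n.+1) => true) (fun i (k : 'I_n.+1) => a i * k)%N n.
rewrite /p_a.
have -> : [set x : {ffun 'I_r -> 'I_n.+1} | [forall i : 'I_r, true] && ((\sum_i a i * x i)%N == n)]
   = [set x : {ffun 'I_r -> 'I_n.+1} | (\sum_i a i * x i)%N == n].
  by apply/setP => x; rewrite !inE; have -> : [forall i : 'I_r, true] by apply/forallP.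
have E i : \sum_(0 <= k < n.+1) ('X^(a i * k) : {poly int}) = \sum_(k < n.+1) true%:R *: 'X^(a i * k).
  by rewrite big_mkord; apply: eq_bigr => k _; rewrite scale1r.
rewrite (eq_bigr _ (fun i _ => E i)).
by move=> <-.
Qed.

Lemma f_coef r (a : 'I_r -> nat) D m : (forall i, 0 < a i)%N ->
  (f_a a D m)%:R = (\prod_(i < r) \sum_(0 <= k < D %/ a i) 'X^(a i * k) : {poly int})`_m.
Proof.
move=> ha.
have := coef_prod_sum _ _ (fun i (k : 'I_D) => (k < D %/ a i)%N) (fun i (k : 'I_D) => a i * k)%N m.
have E i : \sum_(0 <= k < D %/ a i) ('X^(a i * k) : {poly int}) = \sum_(k < D) (k < D %/ a i)%N%:R *: 'X^(a i * k).
  by rewrite sum_trunc // leq_div.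
rewrite (eq_bigr _ (fun i _ => E i)).
by rewrite /f_a => <-.
Qed.
Lemma fact_sum (a d L : nat) :
  (\sum_(0 <= k < d) 'X^(a * k)) * \sum_(0 <= l < L) 'X^((a * d) * l)
  = \sum_(0 <= m < d * L) ('X^(a * m) : {poly int}).
Proof.
elim: L => [|L IH]; first by rewrite muln0 [X in _ * X]big_geq // [RHS]big_geq // mulr0.
rewrite big_nat_recr //= mulrDr IH mulnSr.
rewrite (big_cat_nat (leq0n (d * L)) (leq_addr d (d * L))) /=; congr (_ + _).
rewrite -{1}(add0n (d * L)%N) big_addn addKn mulr_suml; apply: eq_bigr => k _.
by rewrite -exprD; congr ('X^_); rewrite mulnDr mulnA.
Qed.

Lemma tail_sum (a M N : nat) : (0 < a)%N -> (N <= M)%N ->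
  \sum_(0 <= m < M) ('X^(a * m) : {poly int}) = \sum_(0 <= m < N) 'X^(a * m) + 'X^N * \sum_(N <= m < M) 'X^(a * m - N).
Proof.
move=> ha hNM.
rewrite (big_cat_nat (leq0n N) hNM) /=; congr (_ + _).
rewrite mulr_sumr big_nat_cond [RHS]big_nat_cond; apply: eq_bigr => m /andP [/andP [hm _] _].
rewrite -exprD subnKC //; apply: leq_trans hm _; exact: leq_pmull.
Qed.
Lemma tail_sum_old (a M N : nat) : (0 < a)%N -> (N <= M)%N ->
  exists R : {poly int}, \sum_(0 <= m < M) 'X^(a * m) = \sum_(0 <= m < N) 'X^(a * m) + 'X^N * R.
Proof.
move=> ha hNM; exists (\sum_(N <= m < M) 'X^(a * m - N)).
rewrite (big_cat_nat (leq0n N) hNM) /=; congr (_ + _).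
rewrite mulr_sumr big_nat_cond [RHS]big_nat_cond; apply: eq_bigr => m /andP [/andP [hm _] _].
rewrite -exprD subnKC //; apply: leq_trans hm _; exact: leq_pmull.
Qed.

Lemma prod_trunc r (S R : 'I_r -> {poly int}) N :
  exists T, \prod_(i < r) (S i + 'X^N * R i) = \prod_(i < r) S i + 'X^N * T.
Proof.
apply: (big_rec2 (fun y1 y2 => exists T, y1 = y2 + 'X^N * T)).
  by exists 0; rewrite mulr0 addr0.
move=> i y1 y2 _ [T ->]; exists (R i * y2 + S i * T + 'X^N * R i * T).
ring.
Qed.
Lemma comp_exp (p q : {poly int}) r : (p ^+ r) \Po q = (p \Po q) ^+ r.
Proof.
elim: r => [|r IH]; first by rewrite !expr0 comp_polyC.
by rewrite !exprS comp_polyM IH.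
Qed.

Lemma hockey r q : (\sum_(j < q.+1) 'C(j + r, r))%N = 'C(q + r.+1, r.+1).
Proof.
elim: q => [|q IH]; first by rewrite big_ord1 add0n binn add0n binn.
by rewrite big_ord_recr /= IH [in RHS]addSn binS addSnnS.
Qed.

Lemma S_pow_coef n r q : (q <= n)%N ->
  ((\poly_(i < n.+1) (1 : int)) ^+ r.+1)`_q = ('C(q + r, r))%:R.
Proof.
elim: r q => [|r IH] q hq.
  by rewrite expr1 coef_poly ltnS hq addn0 bin0.
rewrite exprS mulrC coefM.
rewrite (eq_bigr (fun j : 'I_q.+1 => ('C(j + r, r))%:R)).
  by rewrite -natr_sum hockey addnS.
move=> j _; rewrite IH; last by apply: leq_trans hq; rewrite -ltnS.
by rewrite coef_poly ltnS (leq_trans (leq_subr _ _) hq) mulr1.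
Qed.

Lemma S_comp n D : (0 < D)%N ->
  (\poly_(i < n.+1) (1 : int)) \Po 'X^D = \sum_(0 <= l < n.+1) 'X^(D * l).
Proof.
move=> hD; rewrite poly_def comp_sum big_mkord; apply: eq_bigr => l _.
by rewrite comp_polyZ scale1r comp_Xn_poly exprM.
Qed.

Lemma split_comp (P : {poly int}) n D :
  P \Po 'X^D = \sum_(q < n.+1) P`_q *: 'X^(D * q)
               + (drop_poly n.+1 P \Po 'X^D) * 'X^(D * n.+1).
Proof.
rewrite -{1}(poly_take_drop n.+1 P) comp_polyD comp_polyM comp_Xn_poly -exprM.
congr (_ + _); rewrite /take_poly poly_def comp_sum; apply: eq_bigr => q _.
by rewrite comp_polyZ comp_Xn_poly exprM.
Qed.

Lemma main_coef r (a : 'I_r -> nat) D n : (0 < r)%N -> (forall i, 0 < a i)%N -> (0 < D)%N ->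
  (forall i, a i %| D)%N ->
  (p_a a n)%:R = \sum_(q < n.+1) ('C(q + r.-1, r.-1))%:R *
     (if (n < D * q)%N then 0 else (f_a a D (n - D * q))%:R) :> int.
Proof.
move=> hr ha hD hdiv.
set G : {poly int} := \sum_(0 <= l < n.+1) 'X^(D * l).
set R := fun i => \sum_(n.+1 <= m < (D %/ a i) * n.+1) ('X^(a i * m - n.+1) : {poly int}).
have HBG i : (\sum_(0 <= k < D %/ a i) 'X^(a i * k)) * G
    = \sum_(0 <= k < n.+1) 'X^(a i * k) + 'X^(n.+1) * R i.
  have hd : (0 < D %/ a i)%N by rewrite divn_gt0 // dvdn_leq.
  have EG : G = \sum_(0 <= l < n.+1) 'X^((a i * (D %/ a i)) * l).
    by rewrite [(a i * _)%N]mulnC divnK.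
  rewrite EG fact_sum (@tail_sum (a i) _ n.+1) //.
  by rewrite leq_pmull.
have [T HT] := @prod_trunc r (fun i : 'I_r => \sum_(0 <= k < n.+1) 'X^(a i * k)) R n.+1.
have E1 : (\prod_(i < r) \sum_(0 <= k < D %/ a i) 'X^(a i * k)) * G ^+ r
    = \prod_(i < r) \sum_(0 <= k < n.+1) 'X^(a i * k) + 'X^(n.+1) * T.
  rewrite -HT -(eq_bigr _ (fun i _ => HBG i)) big_split /=.
  by rewrite -(big_mkord xpredT (fun _ => G)) prodr_const_nat subn0.

rewrite (p_coef r a n).
have -> : (\prod_(i < r) \sum_(0 <= k < n.+1) ('X^(a i * k) : {poly int}))`_n
   = ((\prod_(i < r) \sum_(0 <= k < D %/ a i) 'X^(a i * k)) * G ^+ r)`_n.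
  by rewrite E1 coefD coefXnM ltnSn addr0.
rewrite /G -S_comp // -comp_exp (split_comp _ n) mulrDr coefD mulrA coefMXn.
have -> : (n < D * n.+1)%N by exact: leq_pmull.
rewrite addr0 mulr_sumr coef_sum; apply: eq_bigr => q _.
rewrite -scalerAr coefZ coefMXn -f_coef //.
by rewrite -[X in _ ^+ X](prednK hr) S_pow_coef // -ltnS.
Qed.
Lemma absz_conv (t D n r : nat) : (t * D <= n + r * D)%N ->
  absz (n%:Z - (t%:Z - r%:Z) * D%:Z)%R = (n + r * D - t * D)%N.
Proof. move=> h. lia. Qed.
Lemma prod0 (t r : nat) : (1 <= t)%N -> (t < r)%N ->
  \prod_(1 <= i < r) ((t%:Z - r%:Z) + i%:Z) = 0.
Proof.
move=> h1 h2; apply/eqP; rewrite prodf_seq_eq0; apply/hasP; exists (r - t)%N.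
  rewrite mem_index_iota; lia.
apply/eqP; lia.
Qed.
Lemma cle (n s D r: nat) : (0 < D)%N -> (s <= r * D)%N -> ((n + s + D - 1) %/ D <= n %/ D + r + 1)%N.
Proof. move=> hD hs. rewrite -ltnS ltn_divLR //. have := leq_divM n D. have := ltn_pmod n hD. have := divn_eq n D. nia. Qed.
Lemma f_zero r (a : 'I_r -> nat) D m : (forall i, 0 < a i)%N -> (0 < D)%N ->
  (forall i, a i %| D)%N -> (r * D < m + sigma_a a)%N -> f_a a D m = 0%N.
Proof.
move=> ha hD hdiv hm; apply/eqP; rewrite cards_eq0; apply/eqP/setP => j.
rewrite !inE; apply/negP => /andP [/forallP hj /eqP hs].
have : (\sum_(k < r) (a k * j k + a k) <= \sum_(k < r) D)%N.
  apply: leq_sum => k _.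
  have := hj k; rewrite -(leq_pmul2l (ha k)) mulnS => h.
  by rewrite addnC (leq_trans h) // mulnC divnK.
rewrite big_split /= hs sum_nat_const card_ord /sigma_a in hm *.
by rewrite leqNgt hm.
Qed.

Lemma binprod q r : ('C(q + r, r) * r`!)%N = (\prod_(1 <= i < r.+1) (q + i))%N.
Proof.
elim: r => [|r IH]; first by rewrite bin0 big_geq.
rewrite big_nat_recr //= -IH factS.
have H := mul_bin_diag (q + r.+1) r; rewrite addnS /= in H.
rewrite addnS mulnA [('C(_, _) * _)%N]mulnC -H.
ring.
Qed.

Lemma prodZ q r : ((\prod_(1 <= i < r) (q + i))%N)%:Z = \prod_(1 <= i < r) (q%:Z + i%:Z).
Proof. rewrite -natz natr_prod; apply: eq_bigr => i _; by rewrite natz PoszD. Qed.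

Theorem corollary2p3 (r : nat) (hr : (1 <= r)%N) (a : 'I_r -> nat)
    (ha : forall i, (0 < a i)%N) (D : nat) (hD : (0 < D)%N)
    (hdiv : forall i, (a i %| D)%N) (n : nat) :
  let c := ((n + sigma_a a + D - 1) %/ D)%N in
  ((r.-1)`!)%:Z * (p_a a n)%:Z =
  \sum_(0 <= k < (n %/ D + r + 1 - c)%N)
     let j : int := (c + k)%:Z - r%:Z in
     (\prod_(1 <= i < r) (j + i%:Z)) * (f_a a D (absz (n%:Z - j * D%:Z)%R))%:Z.
Proof.
move=> c.
have hs1 : (r <= sigma_a a)%N.
  have : (\sum_(i < r) 1 <= \sum_(i < r) a i)%N by apply: leq_sum.
  by rewrite sum_nat_const card_ord muln1.
have hs2 : (sigma_a a <= r * D)%N.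
  have : (\sum_(i < r) a i <= \sum_(i < r) D)%N.
    by apply: leq_sum => i _; apply: dvdn_leq.
  by rewrite sum_nat_const card_ord.
have hc1 : (1 <= c)%N by rewrite /c leq_divRL //; lia.
have hcU : (c <= n %/ D + r + 1)%N by apply: cle.
set U := (n %/ D + r + 1)%N.
set h := fun t : nat => (\prod_(1 <= i < r) ((t%:Z - r%:Z) + i%:Z)) *
          (f_a a D (absz (n%:Z - (t%:Z - r%:Z) * D%:Z)%R))%:Z.
have hz t : (t < c)%N -> h t = 0.
  rewrite /c leq_divRL // mulSn => ht.
  have htD : (t * D <= n + r * D)%N by lia.
  rewrite /h absz_conv // f_zero ?mulr0 //; lia.
have -> : \sum_(0 <= k < U - c)
     (let j : int := (c + k)%:Z - r%:Z in
     (\prod_(1 <= i < r) (j + i%:Z)) * (f_a a D (absz (n%:Z - j * D%:Z)%R))%:Z)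
   = \sum_(c <= t < U) h t.
  by rewrite -[in RHS](add0n c) big_addn; apply: eq_bigr => k _; rewrite /h addnC.
have hrU : (r <= U)%N by rewrite /U addnAC leq_addl.
have -> : \sum_(c <= t < U) h t = \sum_(r <= t < U) h t.
  have E1 : \sum_(0 <= t < U) h t = \sum_(c <= t < U) h t.
    rewrite (big_cat_nat (leq0n c) hcU) /= [X in X + _]big_nat_cond [X in X + _]big1 ?add0r //.
    by move=> t /andP [/andP [_ ht] _]; apply: hz.
  rewrite -E1 (big_cat_nat (leq0n r) hrU) /=.
  rewrite [X in X + _]big_nat_cond [X in X + _]big1 ?add0r // => t /andP [/andP [_ ht] _].
  case: (ltnP t c) => htc; first by apply: hz.
  by rewrite /h prod0 ?mul0r //; apply: leq_trans htc.
rewrite -[in RHS](add0n r) big_addn.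
have -> : (U - r = (n %/ D).+1)%N by rewrite /U addnAC addnK addn1.
rewrite -[(p_a a n)%:Z]natz (main_coef r a D n hr ha hD hdiv) mulr_sumr.
rewrite -(big_mkord xpredT (fun q => (r.-1)`!%:Z * ('C(q + r.-1, r.-1)%:R *
     (if (n < D * q)%N then 0 else (f_a a D (n - D * q))%:R)))).
have hnD : ((n %/ D).+1 <= n.+1)%N by rewrite ltnS leq_div.
rewrite (big_cat_nat (leq0n _) hnD) /=.
rewrite [X in _ + X]big_nat_cond [X in _ + X]big1 ?addr0; last first.
  move=> q /andP [/andP [hq _] _].
  have -> : (n < D * q)%N by rewrite mulnC -ltn_divLR.
  by rewrite !mulr0.
rewrite big_nat_cond [RHS]big_nat_cond; apply: eq_bigr => q /andP [/andP [_ hq] _].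
have hqD : (q * D <= n)%N by rewrite -leq_divRL // -ltnS.
have -> : (n < D * q)%N = false by apply/negbTE; rewrite -leqNgt mulnC.
rewrite /h PoszD addrK.
have -> : `|(n%:Z - q%:Z * D%:Z)%R|%N = (n - D * q)%N by lia.
rewrite mulrA !natz -PoszM mulnC binprod prednK // prodZ.
by congr (_ * _).
Qed.
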